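(* Let $n\ge 1$, $N=\{1,\dots,n\}$, $A=(a_{ij})\in[0,1]^{n\times n}$ and $\lambda\in[0,+\infty)$. Let $x=(x_1,\dots,x_n)\in[0,1]^n$ with $x\neq\theta$. Then $x\in V(A,\lambda)$ if and only if there exists $k=(k_1,\dots,k_n)\in K$ such that $$q_{(k_j-1)j}\le x_j\le q_{k_jj}\ \text{ for all } j\in N,\qquad \sum_{j\in N}\big[\delta_{ij}\, x_j+(1-\delta_{ij})\, a_{ij}\big]=\lambda x_i\ \text{ for all } i\in N,$$ where $\delta_{ij}$ (depending on $k$) is as defined in the context.
   Context: $\theta=(0,\dots,0)\in[0,1]^n$. For $x\in[0,1]^n$ and $\lambda\in[0,+\infty)$, the equation $A\odot x^T=\lambda x^T$ means $\sum_{j\in N}\min\{a_{ij},x_j\}=\lambda x_i$ for every $i\in N$ (ordinary addition and multiplication). $V(A,\lambda)=\{x\in[0,1]^n : A\odot x^T=\lambda x^T,\ x\neq\theta\}$ is the set of eigenvectors of $A$ associated with $\lambda$. For each $j\in N$, let $t_j$ be the number of distinct values in $\{a_{ij}: i\in N\}\cap(0,1)$, list these values as $q_{1j}<q_{2j}<\dots<q_{t_jj}$, and put $q_{0j}=0$, $q_{(t_j+1)j}=1$, $Q_j=\{q_{0j},\dots,q_{(t_j+1)j}\}$. Let $K_j=\{k: q_{kj}\in Q_j,\ q_{kj}>0\}=\{1,\dots,t_j+1\}$ and $K=K_1\times\dots\times K_n$. For $k=(k_1,\dots,k_n)\in K$ and $i,j\in N$, set $\delta_{ij}=1$ if $q_{k_jj}\le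 a_{ij}$ and $\delta_{ij}=0$ if $a_{ij}\le q_{(k_j-1)j}$ (exactly one of these holds since $a_{ij}\in Q_j$). *)

(* Defs.v *)
From HB Require Import structures.
From mathcomp Require Import all_boot all_order all_algebra.
From mathcomp Require Import reals.
Set Implicit Arguments. Unset Strict Implicit. Unset Printing Implicit Defensive.
Import Order.TTheory GRing.Theory Num.Theory.
Local Open Scope ring_scope.

Section MaxPlus.
Variables (R : realType) (n : nat).

Definition theta : 'I_n -> R := fun _ => 0.

Definition eigen_eq (A : 'M[R]_n) (lam : R) (x : 'I_n -> R) : Prop :=
  forall i : 'I_n, \sum_(j < n) Num.min (A i j) (x j) = lam * x i.

Definition in_V (A : 'M[R]_n) (lam : R) (x : 'I_n -> R) : Prop :=
  (forall j, 0 <= x j <= 1) /\ eigen_eq A lam x /\ x <> theta.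

Definition qseq (A : 'M[R]_n) (j : 'I_n) : seq R :=
  sort <=%R (undup [seq A i j | i <- enum 'I_n & (0 < A i j) && (A i j < 1)]).

Definition t_ (A : 'M[R]_n) (j : 'I_n) : nat := size (qseq A j).

Definition q (A : 'M[R]_n) (j : 'I_n) (k : nat) : R :=
  if k == 0%N then 0
  else if (k <= t_ A j)%N then nth 0 (qseq A j) k.-1 else 1.

Definition inK (A : 'M[R]_n) (k : 'I_n -> nat) : Prop :=
  forall j, (1 <= k j <= (t_ A j).+1)%N.

(* delta_ij (depending on k): 1 if q_{k_j j} <= a_ij, 0 otherwise
   (otherwise a_ij <= q_{(k_j - 1) j}, since a_ij in Q_j) *)
Definition delta (A : 'M[R]_n) (k : 'I_n -> nat) (i j : 'I_n) : R :=
  if q A j (k j) <= A i j then 1 else 0.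

End MaxPlus.

(* Main.v *)
Require Import Defs.
From HB Require Import structures.
From mathcomp Require Import all_boot all_order all_algebra.
From mathcomp Require Import reals.
Import Order.TTheory GRing.Theory Num.Theory.
Local Open Scope ring_scope.

Section Aux.
Variables (R : realType) (n : nat) (A : 'M[R]_n) (j : 'I_n).

Lemma qseq_in y : y \in qseq A j -> 0 < y < 1.
Proof.
rewrite /qseq mem_sort mem_undup => /mapP [i].
by rewrite mem_filter => /andP [H _] ->.
Qed.

Lemma qseq_mem i : 0 < A i j < 1 -> A i j \in qseq A j.
Proof.
move=> H; rewrite /qseq mem_sort mem_undup; apply/mapP; exists i => //.
by rewrite mem_filter H mem_enum.
Qed.

Lemma nth_in m : m != 0%N -> (m <= t_ A j)%N -> nth 0 (qseq A j) m.-1 \in qseq A j.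
Proof. by case: m => // m _ Hm; apply: mem_nth. Qed.

Lemma q_ge0 m : 0 <= q A j m.
Proof.
rewrite /q; case: eqP => // /eqP Hm0; case: ifP => Hm; last exact: ler01.
by have /qseq_in /andP [H _] := @nth_in m Hm0 Hm; apply: ltW.
Qed.

Lemma q_le1 m : q A j m <= 1.
Proof.
rewrite /q; case: eqP => [_|/eqP Hm0]; first exact: ler01. case: ifP => Hm //.
by have /qseq_in /andP [_ H] := @nth_in m Hm0 Hm; apply: ltW.
Qed.

Lemma q_mono m m' : (m <= m')%N -> q A j m <= q A j m'.
Proof.
move=> Hmm.
case: (m =P 0%N) => [->|/eqP Hm0]; first by rewrite {1}/q eqxx q_ge0.
have Hm'0 : m' != 0%N by apply: contraNneq Hm0 => E; move: Hmm; rewrite E leqn0.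
rewrite /q (negPf Hm'0) (negPf Hm0).
case: ifP => Hm; last first.
  by rewrite ifF //; apply/negbTE; rewrite -ltnNge; apply: leq_trans Hmm; rewrite ltnNge Hm.
case: ifP => Hm'; last first.
  by have /qseq_in /andP [_ H] := @nth_in m Hm0 Hm; apply: ltW.
apply: (sorted_leq_nth le_trans lexx).
- apply: sort_sorted; exact: le_total.
- rewrite inE -/(t_ A j); case: m Hm {Hmm Hm'} Hm0 => //.
- rewrite inE -/(t_ A j); case: m' Hm' {Hmm Hm} Hm'0 => //.
- by rewrite -!subn1 leq_sub2r.
Qed.

Lemma a_inQ i : 0 <= A i j <= 1 -> exists m, (m <= (t_ A j).+1)%N /\ A i j = q A j m.
Proof.
move=> /andP [H0 H1].
case: (ltrP 0 (A i j)) => Hp; last by exists 0%N; split => //; rewrite /q /=; apply/le_anti; rewrite H0 Hp.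
case: (ltrP (A i j) 1) => Hl; last first.
  exists (t_ A j).+1; split => //; rewrite /q /= ltnn; apply/le_anti; rewrite H1 Hl.
  by [].
have Hin : A i j \in qseq A j by apply: qseq_mem; rewrite Hp Hl.
exists (index (A i j) (qseq A j)).+1; split.
  by rewrite ltnS ltnW // index_mem.
by rewrite /q /= -/(t_ A j) index_mem Hin nth_index.
Qed.

Lemma min_split i k xj : 0 <= A i j <= 1 -> (1 <= k)%N ->
  q A j k.-1 <= xj <= q A j k ->
  Num.min (A i j) xj = (if q A j k <= A i j then 1 else 0) * xj
                       + (1 - (if q A j k <= A i j then 1 else 0)) * A i j.
Proof.
move=> HA Hk /andP [Hl Hu].
case: ifP => Hq.
  rewrite mul1r subrr mul0r addr0; apply/min_idPr; exact: le_trans Hu Hq.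
rewrite mul0r add0r subr0 mul1r; apply/min_idPl.
have [m [_ Hm]] := @a_inQ i HA.
apply: le_trans Hl; rewrite Hm; apply: q_mono.
case: (leqP k m) => Hkm; first by move: Hq; rewrite Hm (@q_mono _ _ Hkm).
by rewrite -ltnS prednK.
Qed.

Lemma exists_k xj : 0 <= xj <= 1 -> exists k, (1 <= k <= (t_ A j).+1)%N /\ q A j k.-1 <= xj <= q A j k.
Proof.
move=> /andP [H0 H1].
have Ex : exists m, (0 < m)%N && (xj <= q A j m).
  exists (t_ A j).+1; rewrite /= /q /= ltnn; exact: H1.
case: (ex_minnP Ex) => k /andP [Hpos Hle] Hmin.
exists k; split.
  rewrite Hpos /=; apply: Hmin; rewrite /= /q /= ltnn; exact: H1.
rewrite Hle andbT.
case E: k.-1 => [|m]; first by rewrite /q /=.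
have Hk : k = m.+2 by rewrite -(prednK Hpos) E.
case: (leP (q A j m.+1) xj) => // Hlt.
have := Hmin m.+1; rewrite /= (ltW Hlt) => /(_ isT); rewrite Hk ltnn //.
Qed.

End Aux.

Theorem theorem3p1 (R : realType) (n : nat) (hn : (1 <= n)%N)
  (A : 'M[R]_n) (hA : forall i j, 0 <= A i j <= 1)
  (lam : R) (hlam : 0 <= lam)
  (x : 'I_n -> R) (hx : forall j, 0 <= x j <= 1) (hxne : x <> @theta R n) :
  in_V A lam x <->
  exists k : 'I_n -> nat,
    inK A k /\
    (forall j, q A j (k j).-1 <= x j <= q A j (k j)) /\
    (forall i, \sum_(j < n) (delta A k i j * x j + (1 - delta A k i j) * A i j)
               = lam * x i).
Proof.
split.
- move=> [_ [He _]].
  have Hk : forall j, exists k, (1 <= k <= (t_ A j).+1)%N && (q A j k.-1 <= x j <= q A j k).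
    move=> j; case: (@exists_k _ _ A j _ (hx j)) => k [H1 H2]; exists k; by rewrite H1 H2.
  pose k j := xchoose (Hk j).
  have Hkj j : (1 <= k j <= (t_ A j).+1)%N /\ q A j (k j).-1 <= x j <= q A j (k j).
    by case/andP: (xchooseP (Hk j)).
  exists k; split; first by move=> j; case: (Hkj j).
  split; first by move=> j; case: (Hkj j).
  move=> i; rewrite -He; apply: eq_bigr => j _.
  case: (Hkj j) => /andP [H1 _] H2.
  by rewrite (@min_split _ _ A j i _ _ (hA i j) H1 H2).
- move=> [k [HK [Hb Hs]]]; split => //; split => // i.
  rewrite -Hs; apply: eq_bigr => j _.
  case/andP: (HK j) => H1 _.
  by rewrite (@min_split _ _ A j i _ _ (hA i j) H1 (Hb j)).
Qed.
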